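(* Let $\mathbb F=\mathbb R$ or $\mathbb C$, $G$ an algebraic group over $\mathbb F$ and $\rho:G\to\mathrm{GL}(V)$ a rational representation on an $n$-dimensional space with $\rho(G)\subseteq\mathrm{SL}(V)$, and $0<k<n$. Let $U\subseteq V\otimes\mathbb F^k$ and $\pi_{k,V}$ be as below. Then for every $T\in U$ there is an isomorphism of algebraic groups $\mathrm{Stab}_G(\pi_{k,V}(T))\cong\mathrm{Stab}_{G\times\mathrm{SL}_k}(T)$.
   Context: $U=\{\sum_{i=1}^kv_i\otimes e_i: v_1,\dots,v_k\in V\text{ linearly independent}\}$, $e_i$ the standard basis of $\mathbb F^k$; $\pi_{k,V}(\sum_iv_i\otimes e_i)=v_1\wedge\cdots\wedge v_k\in\bigwedge^kV$. $G$ acts on $\bigwedge^kV$ via $\rho$, and $G\times\mathrm{SL}_k$ acts on $V\otimes\mathbb F^k$ by $(g,A)\cdot(v\otimes w)=\rho(g)v\otimes Aw$. *)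

(* Defs.v *)
From HB Require Import structures.
From mathcomp Require Import all_boot all_order all_algebra.
From mathcomp Require Import reals.
From mathcomp Require Import complex.
From mathcomp Require Import mpoly.

Set Implicit Arguments.
Unset Strict Implicit.
Unset Printing Implicit Defensive.

Import Order.TTheory GRing.Theory Num.Theory.
Local Open Scope ring_scope.

Inductive RC := RealField | ComplexField.

Definition FF (R : realType) (c : RC) : fieldType :=
  match c with
  | RealField => (R : fieldType)
  | ComplexField => ((R[i])%C : fieldType)
  end.

Section Defs.
Variable F : fieldType.

Definition mx_coords (m : nat) (g : 'M[F]_m) : 'I_(m * m) -> F :=
  fun i => mxvec g 0 i.

Definition zariski_closed_GL (m : nat) (G : 'M[F]_m -> Prop) : Prop :=
  exists S : {mpoly F[m * m]} -> Prop,
    forall g, G g <-> (g \in unitmx /\ forall p, S p -> p.@[mx_coords g] = 0).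

Definition alg_group (m : nat) (G : 'M[F]_m -> Prop) : Prop :=
  [/\ zariski_closed_GL G, G 1%:M,
      (forall g h, G g -> G h -> G (g *m h)) &
      (forall g, G g -> G (invmx g))].

Definition regular1 (m : nat) (H : 'M[F]_m -> Prop) (f : 'M[F]_m -> F) : Prop :=
  exists (p : {mpoly F[m * m]}) (N : nat),
    forall g, H g -> f g = p.@[mx_coords g] / (\det g) ^+ N.

Definition regular2 (m k : nat) (H : 'M[F]_m * 'M[F]_k -> Prop)
    (f : 'M[F]_m * 'M[F]_k -> F) : Prop :=
  exists (p : {mpoly F[m * m + k * k]}) (N1 N2 : nat),
    forall x, H x ->
      f x = p.@[fun i => row_mx (mxvec x.1) (mxvec x.2) 0 i]
            / ((\det x.1) ^+ N1 * (\det x.2) ^+ N2).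

Definition rational_rep (m n : nat) (G : 'M[F]_m -> Prop)
    (rho : 'M[F]_m -> 'M[F]_n) : Prop :=
  [/\ (forall g, G g -> rho g \in unitmx),
      (forall g h, G g -> G h -> rho (g *m h) = rho g *m rho h) &
      (forall i j, regular1 G (fun g => rho g i j))].

(* Exterior power bigwedge^k V, V = F^n, modelled as alternating k-tensors:
   an element is its coefficient function on basis tensors e_{f 0} (x) ... (x) e_{f (k-1)}. *)
Definition extpow (n k : nat) := {ffun {ffun 'I_k -> 'I_n} -> F}.

(* pi_{k,V}: the matrix T with columns v_1..v_k (i.e. sum v_i (x) e_i) |-> v_1 /\ ... /\ v_k *)
Definition wedge (n k : nat) (T : 'M[F]_(n, k)) : extpow n k :=
  [ffun f : {ffun 'I_k -> 'I_n} => \det (rowsub (fun i => f i) T)].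

(* induced action of A in GL(V) on bigwedge^k V (restriction of A^{(x) k}) *)
Definition extpow_act (n k : nat) (A : 'M[F]_n) (w : extpow n k) : extpow n k :=
  [ffun f : {ffun 'I_k -> 'I_n} => \sum_(h : {ffun 'I_k -> 'I_n}) (\prod_(i < k) A (f i) (h i)) * w h].

(* U: tensors sum v_i (x) e_i with v_1..v_k linearly independent *)
Definition U_set (n k : nat) (T : 'M[F]_(n, k)) : Prop := \rank T = k.

Definition stab_wedge (m n k : nat) (G : 'M[F]_m -> Prop) (rho : 'M[F]_m -> 'M[F]_n)
    (T : 'M[F]_(n, k)) : 'M[F]_m -> Prop :=
  fun g => G g /\ extpow_act (rho g) (wedge T) = wedge T.

(* the action (g, A) . (v (x) w) = rho g v (x) A w on V (x) F^k = n x k matrices: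
   T |-> rho g *m T *m A^T *)
Definition tensor_act (m n k : nat) (rho : 'M[F]_m -> 'M[F]_n)
    (x : 'M[F]_m * 'M[F]_k) (T : 'M[F]_(n, k)) : 'M[F]_(n, k) :=
  rho x.1 *m T *m (x.2)^T.

Definition stab_tensor (m n k : nat) (G : 'M[F]_m -> Prop) (rho : 'M[F]_m -> 'M[F]_n)
    (T : 'M[F]_(n, k)) : 'M[F]_m * 'M[F]_k -> Prop :=
  fun x => [/\ G x.1, \det x.2 = 1 & tensor_act rho x T = T].

Definition pair_mul (m k : nat) (x y : 'M[F]_m * 'M[F]_k) : 'M[F]_m * 'M[F]_k :=
  (x.1 *m y.1, x.2 *m y.2).

Definition alg_group_iso (m k : nat) (H1 : 'M[F]_m -> Prop)
    (H2 : 'M[F]_m * 'M[F]_k -> Prop) : Prop :=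
  exists (phi : 'M[F]_m -> 'M[F]_m * 'M[F]_k) (psi : 'M[F]_m * 'M[F]_k -> 'M[F]_m),
    [/\ (forall x, H1 x -> H2 (phi x)),
        (forall y, H2 y -> H1 (psi y)),
        (forall x, H1 x -> psi (phi x) = x),
        (forall y, H2 y -> phi (psi y) = y) &
        (forall x y, H1 x -> H1 y -> phi (x *m y) = pair_mul (phi x) (phi y))] /\
    [/\ (forall i j, regular1 H1 (fun x => (phi x).1 i j)),
        (forall i j, regular1 H1 (fun x => (phi x).2 i j)) &
        (forall i j, regular2 H2 (fun y => psi y i j))].

End Defs.

(* Main.v *)
Require Import Defs.
From HB Require Import structures.
From mathcomp Require Import all_boot all_order all_algebra.
From mathcomp Require Import reals.
From mathcomp Require Import complex.
From mathcomp Require Import mpoly.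
From mathcomp Require Import perm.
Import Order.TTheory GRing.Theory Num.Theory.
Local Open Scope ring_scope.
Set Implicit Arguments.
Unset Strict Implicit.

Section Reg.
Variables (F : fieldType) (m : nat).

Definition pfun (f : 'M[F]_m -> F) :=
  exists p : {mpoly F[m * m]}, forall g, f g = p.@[mx_coords g].

Lemma pf_ext f f' : (forall g, f g = f' g) -> pfun f' -> pfun f.
Proof. by move=> e [p hp]; exists p => g; rewrite e hp. Qed.

Lemma pf_const c : pfun (fun _ => c).
Proof. by exists c%:MP => g; rewrite mevalC. Qed.

Lemma pf_add f1 f2 : pfun f1 -> pfun f2 -> pfun (fun g => f1 g + f2 g).
Proof. by move=> [p1 h1] [p2 h2]; exists (p1 + p2) => g; rewrite mevalD h1 h2. Qed.

Lemma pf_mul f1 f2 : pfun f1 -> pfun f2 -> pfun (fun g => f1 g * f2 g).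
Proof. by move=> [p1 h1] [p2 h2]; exists (p1 * p2) => g; rewrite mevalM h1 h2. Qed.

Lemma pf_entry i j : pfun (fun g => g i j).
Proof.
by exists 'X_(mxvec_index i j) => g; rewrite mevalXU /mx_coords mxvecE.
Qed.

Lemma pf_sum (I : Type) (r : seq I) (P : I -> 'M[F]_m -> F) :
  (forall i, pfun (P i)) -> pfun (fun g => \sum_(i <- r) P i g).
Proof.
move=> hP; elim: r => [|a r IH].
  by apply: pf_ext (pf_const 0) => g; rewrite big_nil.
by apply: pf_ext (pf_add (hP a) IH) => g; rewrite big_cons.
Qed.

Lemma pf_prod (I : Type) (r : seq I) (P : I -> 'M[F]_m -> F) :
  (forall i, pfun (P i)) -> pfun (fun g => \prod_(i <- r) P i g).
Proof.
move=> hP; elim: r => [|a r IH].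
  by apply: pf_ext (pf_const 1) => g; rewrite big_nil.
by apply: pf_ext (pf_mul (hP a) IH) => g; rewrite big_cons.
Qed.

Lemma pf_det : pfun (fun g => \det g).
Proof.
have h : pfun (fun g : 'M[F]_m => \sum_(s : perm_of 'I_m) (-1) ^+ s * \prod_i g i (s i)).
  apply: pf_sum => s; apply: pf_mul; first exact: pf_const.
  by apply: pf_prod => i; apply: pf_entry.
exact: h.
Qed.

Variable H : 'M[F]_m -> Prop.
Hypothesis hH : forall g, H g -> \det g != 0.

Lemma reg_ext f f' : (forall g, H g -> f g = f' g) -> regular1 H f' -> regular1 H f.
Proof. by move=> e [p [N hp]]; exists p, N => g Hg; rewrite e // hp. Qed.

Lemma reg_pf f : pfun f -> regular1 H f.
Proof. by move=> [p hp]; exists p, 0%N => g _; rewrite expr0 divr1 hp. Qed.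

Lemma reg_const c : regular1 H (fun _ => c).
Proof. exact/reg_pf/pf_const. Qed.

Lemma reg_add f1 f2 : regular1 H f1 -> regular1 H f2 -> regular1 H (fun g => f1 g + f2 g).
Proof.
move=> [p1 [N1 h1]] [p2 [N2 h2]]; have [D hD] := pf_det.
exists (p1 * D ^+ N2 + p2 * D ^+ N1), (N1 + N2)%N => g Hg.
rewrite h1 // h2 // addf_div ?expf_neq0 ?hH // exprD.
by rewrite mevalD !mevalM !rmorphXn /= -hD.
Qed.

Lemma reg_mul f1 f2 : regular1 H f1 -> regular1 H f2 -> regular1 H (fun g => f1 g * f2 g).
Proof.
move=> [p1 [N1 h1]] [p2 [N2 h2]].
exists (p1 * p2), (N1 + N2)%N => g Hg.
by rewrite h1 // h2 // mulf_div exprD mevalM.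
Qed.

Lemma reg_sum (I : Type) (r : seq I) (P : I -> 'M[F]_m -> F) :
  (forall i, regular1 H (P i)) -> regular1 H (fun g => \sum_(i <- r) P i g).
Proof.
move=> hP; elim: r => [|a r IH].
  by apply: reg_ext (reg_const 0) => g; rewrite big_nil.
by apply: reg_ext (reg_add (hP a) IH) => g; rewrite big_cons.
Qed.

Lemma reg_prod (I : Type) (r : seq I) (P : I -> 'M[F]_m -> F) :
  (forall i, regular1 H (P i)) -> regular1 H (fun g => \prod_(i <- r) P i g).
Proof.
move=> hP; elim: r => [|a r IH].
  by apply: reg_ext (reg_const 1) => g; rewrite big_nil.
by apply: reg_ext (reg_mul (hP a) IH) => g; rewrite big_cons.
Qed.

Lemma reg_det q (M : 'M[F]_m -> 'M[F]_q) :
  (forall i j, regular1 H (fun g => M g i j)) -> regular1 H (fun g => \det (M g)).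
Proof.
move=> hM.
have h : regular1 H (fun g => \sum_(s : perm_of 'I_q) (-1) ^+ s * \prod_i M g i (s i)).
  apply: reg_sum => s; apply: reg_mul; first exact: reg_const.
  by apply: reg_prod => i; apply: hM.
exact: h.
Qed.

Lemma reg_mulmx p q r (A : 'M[F]_m -> 'M[F]_(p, q)) (B : 'M[F]_m -> 'M[F]_(q, r)) :
  (forall i j, regular1 H (fun g => A g i j)) ->
  (forall i j, regular1 H (fun g => B g i j)) ->
  forall i j, regular1 H (fun g => (A g *m B g) i j).
Proof.
move=> hA hB i j; apply: reg_ext (reg_sum (index_enum _) _) => [g _|l].
  by rewrite mxE.
exact: reg_mul.
Qed.

End Reg.

Lemma reg_mono (F : fieldType) m (H H' : 'M[F]_m -> Prop) f :
  (forall g, H' g -> H g) -> regular1 H f -> regular1 H' f.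
Proof. by move=> s [p [N hp]]; exists p, N => g /s; apply: hp. Qed.
Section Wedge.
Variables (F : fieldType) (n k : nat).

Lemma wedge_mulr (T : 'M[F]_(n, k)) (C : 'M[F]_k) f :
  wedge (T *m C) f = \det C * wedge T f.
Proof. by rewrite !ffunE -mul_rowsub_mx det_mulmx mulrC. Qed.

Lemma extpow_wedge (A : 'M[F]_n) (T : 'M[F]_(n, k)) :
  extpow_act A (wedge T) = wedge (A *m T).
Proof.
apply/ffunP => f; rewrite !ffunE.
under eq_bigr do rewrite ffunE.
rewrite /determinant.
under [RHS]eq_bigr => s _.
  under eq_bigr => i _ do rewrite !mxE.
  rewrite bigA_distr_bigA big_distrr /=.
  over.
rewrite exchange_big /=; apply: eq_bigr => h _.
rewrite big_distrr /=; apply: eq_bigr => s _.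
rewrite big_split /=.
by rewrite mulrCA; congr (_ * (_ * _)); apply: eq_bigr => i _; rewrite mxE.
Qed.


Lemma cofactor_row' (A B : 'M[F]_k) i j :
  row' i A = row' i B -> cofactor A i j = cofactor B i j.
Proof.
move=> e; rewrite /cofactor; congr (_ * \det _).
apply/matrixP => a b; move/matrixP: e => /(_ a (lift j b)).
by rewrite !mxE.
Qed.

Lemma wedge_repl (X : 'M[F]_(n, k)) (f0 : {ffun 'I_k -> 'I_n}) r i :
  rowsub (fun t => f0 t) X = 1%:M ->
  wedge X [ffun t => if t == i then r else f0 t] = X r i.
Proof.
move=> h1; rewrite ffunE.
set E := rowsub _ X.
rewrite (expand_det_row E i).
have ce j : cofactor E i j = (j == i)%:R.
  rewrite (@cofactor_row' E 1%:M).
    by have := congr1 (fun M : 'M[F]_k => M j i) (adj1 F k); rewrite /= !mxE.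
  apply/matrixP => a b; rewrite !mxE ffunE.
  have /negbTE -> : lift i a != i by rewrite eq_sym neq_lift.
  by have := congr1 (fun M : 'M[F]_k => M (lift i a) b) h1; rewrite !mxE.
under eq_bigr do rewrite ce.
rewrite (bigD1 i) //= big1 => [|j /negbTE ->]; last by rewrite mulr0.
by rewrite eqxx mulr1 addr0 /E mxE ffunE eqxx.
Qed.

End Wedge.

Lemma exists_f0 (F : fieldType) n k (T : 'M[F]_(n, k)) : \rank T = k ->
  exists f0 : {ffun 'I_k -> 'I_n}, rowsub (fun t => f0 t) T \in unitmx.
Proof.
move=> rk.
have : exists g : 'I_(\rank T) -> 'I_n, row_free (rowsub g T).
  by exists (maxrankfun T); apply: maxrowsub_free.
rewrite rk => -[g hg]; exists [ffun t => g t].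
rewrite -row_free_unit.
by have -> : rowsub (fun t => [ffun t => g t] t) T = rowsub g T
  by apply/matrixP => a b; rewrite !mxE ffunE.
Qed.

Lemma plucker (F : fieldType) n k (T S : 'M[F]_(n, k)) (f0 : {ffun 'I_k -> 'I_n}) :
  rowsub (fun t => f0 t) T \in unitmx -> wedge S = wedge T ->
  let L := invmx (rowsub (fun t => f0 t) T) *m rowsub (fun t => f0 t) 1%:M in
  S = T *m (L *m S) /\ \det (L *m S) = 1.
Proof.
set M := rowsub _ T => hM hS L.
set N := rowsub (fun t => f0 t) S.
have dN : \det N = \det M.
  by have := congr1 (fun w : extpow F n k => w f0) hS; rewrite /= !ffunE.
have dM0 : \det M != 0 by rewrite -unitfE -unitmxE.
have hN : N \in unitmx by rewrite unitmxE dN unitfE.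
have LS : L *m S = invmx M *m N by rewrite -mulmxA mul_rowsub_mx mul1mx.
rewrite LS det_mulmx det_inv dN mulVf //; split => //.
have e : T *m invmx M = S *m invmx N.
  apply/matrixP => r i.
  rewrite -(@wedge_repl _ _ _ (T *m invmx M) f0 r i); last first.
    by rewrite -mul_rowsub_mx mulmxV.
  rewrite -(@wedge_repl _ _ _ (S *m invmx N) f0 r i); last first.
    by rewrite -mul_rowsub_mx mulmxV.
  by rewrite !wedge_mulr !det_inv hS dN.
by rewrite mulmxA e mulmxKV.
Qed.

Lemma invmxM' (F : fieldType) k (P Q : 'M[F]_k) : P \in unitmx -> Q \in unitmx ->
  invmx (P *m Q) = invmx Q *m invmx P.
Proof.
move=> hP hQ; have hPQ : P *m Q \in unitmx by rewrite unitmx_mul hP.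
have h : (invmx Q *m invmx P) *m (P *m Q) = 1%:M.
  by rewrite -!mulmxA (mulmxA (invmx P)) mulVmx // mul1mx mulVmx.
by rewrite -[LHS]mul1mx -h -mulmxA mulmxV // mulmx1.
Qed.

Lemma adjinv (F : fieldType) k (P : 'M[F]_k) : \det P = 1 -> \adj P = invmx P.
Proof. by move=> d; rewrite /invmx unitmxE d unitr1 invr1 scale1r. Qed.

Theorem main_gen (F : fieldType) (m n k : nat)
    (G : 'M[F]_m -> Prop) (rho : 'M[F]_m -> 'M[F]_n) :
  alg_group G -> rational_rep G rho ->
  forall T : 'M[F]_(n, k), U_set T ->
    alg_group_iso (stab_wedge G rho T) (stab_tensor G rho T).
Proof.
move=> [[Sz hS] _ _ _] [rU rM rR] T rkT.
have Gunit g : G g -> g \in unitmx by move/hS => [].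
have [f0 hM] := exists_f0 rkT.
set M := rowsub _ T in hM.
set L := invmx M *m rowsub (fun t => f0 t) 1%:M.
have LT : L *m T = 1%:M by rewrite -mulmxA mul_rowsub_mx mul1mx mulVmx.
pose B g := L *m rho g *m T.
have stabB g : stab_wedge G rho T g -> rho g *m T = T *m B g /\ \det (B g) = 1.
  move=> [_ hw]; rewrite extpow_wedge in hw.
  have [e1 e2] := plucker hM hw.
  by rewrite /B -mulmxA.
have Bunit g : stab_wedge G rho T g -> B g \in unitmx.
  by move/stabB => [_ d]; rewrite unitmxE d unitr1.
have psiB (y : 'M[F]_m * 'M[F]_k) : stab_tensor G rho T y ->
    rho y.1 *m T = T *m invmx (y.2)^T /\ B y.1 = invmx (y.2)^T.
  case: y => g A [/= hg dA eA].
  have hA : A^T \in unitmx by rewrite unitmx_tr unitmxE dA unitr1.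
  have e : rho g *m T = T *m invmx A^T by rewrite -{2}eA mulmxK.
  by split => //; rewrite /B -mulmxA e mulmxA LT mul1mx.
exists (fun g => (g, (\adj (B g))^T)), (fun y => y.1).
split; first split.
- move=> g hg; have [eB dB] := stabB g hg; split => /=.
  + by case: hg.
  + by rewrite det_tr adjinv // det_inv dB invr1.
  + by rewrite /tensor_act /= trmxK eB adjinv // mulmxK // Bunit.
- move=> [g A] hy; have [e _] := psiB _ hy; case: hy => /= hg dA _.
  split => //; rewrite extpow_wedge e.
  by apply/ffunP => f; rewrite wedge_mulr det_inv det_tr dA invr1 mul1r.
- by [].
- move=> [g A] hy; have [_ e] := psiB _ hy; case: hy => /= hg dA _.
  have dI : \det (invmx A^T) = 1 by rewrite det_inv det_tr dA invr1.
  by rewrite e adjinv // invmxK trmxK.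
- move=> x y hx hy; rewrite /pair_mul /=; congr pair.
  have [ex dx] := stabB x hx; have [ey dy] := stabB y hy.
  have eB : B (x *m y) = B x *m B y.
    have Gx : G x by case: hx.
    have Gy : G y by case: hy.
    rewrite {1}/B rM // -mulmxA -(mulmxA (rho x)) ey (mulmxA (rho x)) ex.
    by rewrite !mulmxA LT mul1mx.
  rewrite eB !adjinv ?det_mulmx ?dx ?dy ?mulr1 //.
  by rewrite invmxM' ?Bunit // trmx_mul.
have hH g : stab_wedge G rho T g -> \det g != 0.
  by move=> [/Gunit]; rewrite unitmxE unitfE.
have regrho i j : regular1 (stab_wedge G rho T) (fun g => rho g i j).
  by apply: reg_mono (rR i j) => g [].
have regB i j : regular1 (stab_wedge G rho T) (fun g => B g i j).
  apply: reg_mulmx => // a b; last exact: reg_const.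
  apply: reg_mulmx => // a' b'; exact: reg_const.
split.
- by move=> i j; apply/reg_pf/pf_entry.
- move=> i j /=.
  have h : regular1 (stab_wedge G rho T)
      (fun g => (-1) ^+ (i + j) * \det (row' i (col' j (B g)))).
    apply: reg_mul => //; first exact: reg_const.
    apply: reg_det => // a b.
    by apply: reg_ext (regB (lift i a) (lift j b)) => g _; rewrite !mxE.
  by apply: reg_ext h => g _; rewrite !mxE.
- move=> i j; exists 'X_(lshift (k * k) (mxvec_index i j)), 0%N, 0%N.
  by move=> y _; rewrite !expr0 mulr1 divr1 mevalXU row_mxEl mxvecE.
Qed.

Theorem lemma3p2 (R : realType) (c : RC) (m n k : nat)
    (G : 'M[FF R c]_m -> Prop) (rho : 'M[FF R c]_m -> 'M[FF R c]_n) :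
  alg_group G ->
  rational_rep G rho ->
  (forall g, G g -> \det (rho g) = 1) ->
  (0 < k < n)%N ->
  forall T : 'M[FF R c]_(n, k), U_set T ->
    alg_group_iso (stab_wedge G rho T) (stab_tensor G rho T).
Proof. by move=> hG hr _ _; apply: main_gen. Qed.
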